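(* Let $\mathbf{C}$ be a small 2-category and $\mathbf{D}$ a 2-category with an enhanced factorization system $(\mathcal{E},\mathcal{M})$ such that: $(\mathcal{E},\mathcal{M})$ separates parallel pairs; every 1-cell in $\mathcal{E}$ is a 2-epimorphism and every 1-cell in $\mathcal{M}$ is a 2-monomorphism; and post-composition with 1-cells in $\mathcal{M}$ creates invertible 2-cells. Then $(\mathcal{E}^{\mathbf{C}},\mathcal{M}^{\mathbf{C}})$ is a rigid enhanced factorization system on $\mathbf{D}^{\mathbf{C}}$.
   Context: For a 2-category $\mathbf{A}$, an enhanced factorization system on $\mathbf{A}$ is a pair $(\mathcal{E},\mathcal{M})$ of classes of 1-cells of $\mathbf{A}$, each containing all isomorphisms, such that: (i) every 1-cell $\alpha$ factors (not necessarily uniquely) as $\alpha=\mu\circ\varepsilon$ with $\varepsilon\in\mathcal{E}$, $\mu\in\mathcal{M}$; (ii) given $\varepsilon\colon F\to F'$ in $\mathcal{E}$, $\mu\colon G\to G'$ in $\mathcal{M}$, 1-cells $\alpha\colon F\to G$, $\alpha'\colon F'\to G'$ and an invertible 2-cell $\Psi\colon \alpha'\varepsilon\Rightarrow\mu\alpha$, there is a unique pair $(\delta,\widetilde\Psi)$ with $\delta\colon F'\to G$ a 1-cell and $\widetilde\Psi\colon\alpha'\Rightarrow\mu\delta$ an invertible 2-cell such that $\delta\varepsilon=\alpha$ and the whiskering $\widetilde\Psi\varepsilon=\Psi$; moreover if $\Psi$ is an identity then $\mu\delta=\alpha'$ and $\widetilde\Psi$ is an identity; (iii) given $\varepsilon\colon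 F\to F'$ in $\mathcal{E}$, $\mu\colon G\to G'$ in $\mathcal{M}$, parallel 1-cells $\alpha_1,\alpha_2\colon F\to G$ and $\alpha_1',\alpha_2'\colon F'\to G'$ with $\alpha_i'\varepsilon=\mu\alpha_i$ ($i=1,2$), and 2-cells $\Phi\colon\alpha_1\Rightarrow\alpha_2$, $\Phi'\colon\alpha_1'\Rightarrow\alpha_2'$ with $\mu\Phi=\Phi'\varepsilon$, let $\delta_i\colon F'\to G$ be the unique 1-cells with $\delta_i\varepsilon=\alpha_i$ and $\mu\delta_i=\alpha_i'$ (from (ii) with identity 2-cell); then there is a unique 2-cell $\Delta\colon\delta_1\Rightarrow\delta_2$ with $\Delta\varepsilon=\Phi$ and $\mu\Delta=\Phi'$. It is rigid if moreover: for 1-cells $\mu\colon F\to G$ in $\mathcal{M}$ and $\alpha\colon G\to F$, if $\mu\alpha\cong\mathrm{id}_G$ (invertible 2-cell) then $\alpha\mu\cong\mathrm{id}_F$. $(\mathcal{E},\mathcal{M})$ separates parallel pairs if whenever $\alpha,\beta\colon F\to G$ are parallel 1-cells for which there exist $\varepsilon\in\mathcal{E}$ with target $F$ and $\alpha\varepsilon=\beta\varepsilon$, and $\mu\in\mathcal{M}$ with source $G$ and $\mu\alpha=\mu\beta$, then $\alpha=\beta$. A 1-cell $\varepsilon\colon F\to G$ is a 2-epimorphism if for all 1-cells $\beta,\beta'\colon G\to H$ and 2-cells $\Psi,\Psi'\colon\beta\Rightarrow\beta'$, $\Psi\varepsilon=\Psi'\varepsilon$ implies $\Psi=\Psi'$.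 A 1-cell $\mu\colon G\to H$ is a 2-monomorphism if for all 1-cells $\beta,\beta'\colon F\to G$ and 2-cells $\Psi,\Psi'\colon\beta\Rightarrow\beta'$, $\mu\Psi=\mu\Psi'$ implies $\Psi=\Psi'$. Post-composition with a 1-cell $\mu$ creates invertible 2-cells if for all parallel 1-cells $\alpha,\beta$ (composable with $\mu$) and every invertible 2-cell $\Psi\colon\mu\alpha\Rightarrow\mu\beta$ there is a unique invertible 2-cell $\widehat\Psi\colon\alpha\Rightarrow\beta$ with $\mu\widehat\Psi=\Psi$; post-composition with 1-cells in $\mathcal{M}$ creates invertible 2-cells if this holds for every $\mu\in\mathcal{M}$. $\mathbf{D}^{\mathbf{C}}$ is the 2-category of 2-functors $\mathbf{C}\to\mathbf{D}$, 2-natural transformations, and modifications. $\mathcal{E}^{\mathbf{C}}$ (resp. $\mathcal{M}^{\mathbf{C}}$) is the class of 2-natural transformations all of whose components lie in $\mathcal{E}$ (resp. $\mathcal{M}$). *)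

(* Defs.v *)
From Stdlib Require Import Eqdep Setoid.

Record PreTwoCat := {
  ob : Type;
  hom : ob -> ob -> Type;
  cell : forall (A B : ob), hom A B -> hom A B -> Type;
  id1 : forall A : ob, hom A A;
  comp1 : forall (A B C : ob), hom B C -> hom A B -> hom A C;  (* comp1 g f = g o f *)
  id2 : forall (A B : ob) (f : hom A B), cell A B f f;
  vcomp : forall (A B : ob) (f g h : hom A B),
      cell A B g h -> cell A B f g -> cell A B f h;
  hcomp : forall (A B C : ob) (f f' : hom A B) (g g' : hom B C),
      cell B C g g' -> cell A B f f' -> cell A C (comp1 A B C g f) (comp1 A B C g' f')
}.
Arguments hom {_} _ _.
Arguments cell {_ _ _} _ _.
Arguments id1 {_} _.
Arguments comp1 {_ _ _ _} _ _.
Arguments id2 {_ _ _} _.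
Arguments vcomp {_ _ _ _ _ _} _ _.
Arguments hcomp {_ _ _ _ _ _ _ _} _ _.

(* Heterogeneous equality of 2-cells with the same endpoints objects but
   possibly (propositionally equal) different source/target 1-cells:
   equality of the packed dependent pairs ((source,target), cell). *)
Definition Cells {P : PreTwoCat} (A B : ob P) :=
  { p : hom A B * hom A B & cell (fst p) (snd p) }.
Definition pk {P : PreTwoCat} {A B : ob P} {f g : hom A B} (x : cell f g) : Cells A B :=
  existT (fun p : hom A B * hom A B => cell (fst p) (snd p)) (f, g) x.
Definition Heq {P : PreTwoCat} {A B : ob P} {f g f' g' : hom A B}
  (x : cell f g) (y : cell f' g') : Prop := pk x = pk y.

Definition lwhisk {P : PreTwoCat} {A B C : ob P} (g : hom B C) {f f' : hom A B}
  (x : cell f f') : cell (comp1 g f) (comp1 g f') := hcomp (id2 g) x.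
Definition rwhisk {P : PreTwoCat} {A B C : ob P} {g g' : hom B C} (x : cell g g')
  (f : hom A B) : cell (comp1 g f) (comp1 g' f) := hcomp x (id2 f).

Record TwoCatAx (P : PreTwoCat) : Prop := {
  ax_comp1_assoc : forall (A B C D : ob P) (f : hom A B) (g : hom B C) (h : hom C D),
      comp1 h (comp1 g f) = comp1 (comp1 h g) f;
  ax_comp1_id_l : forall (A B : ob P) (f : hom A B), comp1 (id1 B) f = f;
  ax_comp1_id_r : forall (A B : ob P) (f : hom A B), comp1 f (id1 A) = f;
  ax_vcomp_assoc : forall (A B : ob P) (f g h k : hom A B)
      (x : cell h k) (y : cell g h) (z : cell f g),
      vcomp x (vcomp y z) = vcomp (vcomp x y) z;
  ax_vcomp_id_l : forall (A B : ob P) (f g : hom A B) (x : cell f g), vcomp (id2 g) x = x;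
  ax_vcomp_id_r : forall (A B : ob P) (f g : hom A B) (x : cell f g), vcomp x (id2 f) = x;
  ax_hcomp_assoc : forall (A B C D : ob P) (f f' : hom A B) (g g' : hom B C) (h h' : hom C D)
      (x : cell f f') (y : cell g g') (z : cell h h'),
      Heq (hcomp z (hcomp y x)) (hcomp (hcomp z y) x);
  ax_hcomp_id_l : forall (A B : ob P) (f f' : hom A B) (x : cell f f'),
      Heq (hcomp (id2 (id1 B)) x) x;
  ax_hcomp_id_r : forall (A B : ob P) (f f' : hom A B) (x : cell f f'),
      Heq (hcomp x (id2 (id1 A))) x;
  ax_hcomp_id2 : forall (A B C : ob P) (f : hom A B) (g : hom B C),
      hcomp (id2 g) (id2 f) = id2 (comp1 g f);
  ax_interchange : forall (A B C : ob P) (f f' f'' : hom A B) (g g' g'' : hom B C)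
      (x : cell f f') (x' : cell f' f'') (y : cell g g') (y' : cell g' g''),
      hcomp (vcomp y' y) (vcomp x' x) = vcomp (hcomp y' x') (hcomp y x)
}.

Record TwoCat := { pre :> PreTwoCat; tc_ax : TwoCatAx pre }.

Section HeqLemmas.
Context {P : PreTwoCat}.

Lemma Heq_refl {A B : ob P} {f g : hom A B} (x : cell f g) : Heq x x.
Proof. reflexivity. Qed.
Lemma Heq_sym {A B : ob P} {f g f' g' : hom A B} (x : cell f g) (y : cell f' g') :
  Heq x y -> Heq y x.
Proof. unfold Heq; intros; symmetry; assumption. Qed.
Lemma Heq_trans {A B : ob P} {f g f' g' f'' g'' : hom A B} (x : cell f g) (y : cell f' g')
  (z : cell f'' g'') : Heq x y -> Heq y z -> Heq x z.
Proof. unfold Heq; intros; etransitivity; eassumption. Qed.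
Lemma Heq_of_eq {A B : ob P} {f g : hom A B} (x y : cell f g) : x = y -> Heq x y.
Proof. intros ->; reflexivity. Qed.
Lemma Heq_eq {A B : ob P} {f g : hom A B} (x y : cell f g) : Heq x y -> x = y.
Proof. intro H; exact (inj_pair2 _ _ _ _ _ H). Qed.
Lemma Heq_idx {A B : ob P} {f g f' g' : hom A B} (x : cell f g) (y : cell f' g') :
  Heq x y -> f = f' /\ g = g'.
Proof.
  intro H; pose proof (f_equal (@projT1 _ _) H) as H1; simpl in H1.
  injection H1; auto.
Qed.
Lemma Heq_id2 {A B : ob P} (f g : hom A B) : f = g -> Heq (id2 f) (id2 g).
Proof. intros ->; reflexivity. Qed.
Lemma Heq_hcomp {A B C : ob P} {f1 f1' f2 f2' : hom A B} {g1 g1' g2 g2' : hom B C}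
  (y1 : cell g1 g1') (x1 : cell f1 f1') (y2 : cell g2 g2') (x2 : cell f2 f2') :
  Heq y1 y2 -> Heq x1 x2 -> Heq (hcomp y1 x1) (hcomp y2 x2).
Proof.
  intros e1 e2.
  pose (H := fun (s : Cells B C) (t : Cells A B) =>
    pk (hcomp (projT2 s) (projT2 t))).
  exact (f_equal2 H e1 e2).
Qed.
Lemma Heq_vcomp {A B : ob P} {f g h f' g' h' : hom A B}
  (x : cell g h) (y : cell f g) (x' : cell g' h') (y' : cell f' g') :
  Heq x x' -> Heq y y' -> Heq (vcomp x y) (vcomp x' y').
Proof.
  intros Hx Hy.
  destruct (Heq_idx _ _ Hy) as [<- <-].
  destruct (Heq_idx _ _ Hx) as [_ <-].
  apply Heq_eq in Hx; apply Heq_eq in Hy; subst; reflexivity.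
Qed.
End HeqLemmas.

Record TwoFunctor (C D : PreTwoCat) := {
  fob : ob C -> ob D;
  fhom : forall A B : ob C, hom A B -> hom (fob A) (fob B);
  fcell : forall (A B : ob C) (f g : hom A B), cell f g -> cell (fhom A B f) (fhom A B g);
  f_id1 : forall A : ob C, fhom A A (id1 A) = id1 (fob A);
  f_comp1 : forall (A B X : ob C) (f : hom A B) (g : hom B X),
      fhom A X (comp1 g f) = comp1 (fhom B X g) (fhom A B f);
  f_id2 : forall (A B : ob C) (f : hom A B), fcell A B f f (id2 f) = id2 (fhom A B f);
  f_vcomp : forall (A B : ob C) (f g h : hom A B) (x : cell g h) (y : cell f g),
      fcell A B f h (vcomp x y) = vcomp (fcell A B g h x) (fcell A B f g y);
  f_hcomp : forall (A B X : ob C) (f f' : hom A B) (g g' : hom B X)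
      (y : cell g g') (x : cell f f'),
      Heq (fcell A X _ _ (hcomp y x)) (hcomp (fcell B X g g' y) (fcell A B f f' x))
}.
Arguments fob {_ _} _ _.
Arguments fhom {_ _} _ {_ _} _.
Arguments fcell {_ _} _ {_ _ _ _} _.

Record TwoNat {C D : PreTwoCat} (F G : TwoFunctor C D) := {
  ncomp : forall A : ob C, hom (fob F A) (fob G A);
  nat1 : forall (A B : ob C) (f : hom A B),
      comp1 (fhom G f) (ncomp A) = comp1 (ncomp B) (fhom F f);
  nat2 : forall (A B : ob C) (f f' : hom A B) (x : cell f f'),
      Heq (rwhisk (fcell G x) (ncomp A)) (lwhisk (ncomp B) (fcell F x))
}.
Arguments ncomp {_ _ _ _} _ _.
Arguments nat1 {_ _ _ _} _ {_ _} _.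
Arguments nat2 {_ _ _ _} _ {_ _ _ _} _.

Record Modif {C D : PreTwoCat} {F G : TwoFunctor C D} (s t : TwoNat F G) := {
  mcomp : forall A : ob C, cell (ncomp s A) (ncomp t A);
  mnat : forall (A B : ob C) (f : hom A B),
      Heq (lwhisk (fhom G f) (mcomp A)) (rwhisk (mcomp B) (fhom F f))
}.
Arguments mcomp {_ _ _ _ _ _} _ _.
Arguments mnat {_ _ _ _ _ _} _ {_ _} _.

Section FunCat.
Context (C : PreTwoCat) (D : TwoCat).

Let AX := tc_ax D.

Definition idnat (F : TwoFunctor C D) : TwoNat F F.
Proof.
  refine {| ncomp := fun A => id1 (fob F A) |}.
  - intros A B f. rewrite (ax_comp1_id_r _ AX), (ax_comp1_id_l _ AX). reflexivity.
  - intros A B f f' x. unfold rwhisk, lwhisk.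
    eapply Heq_trans. apply (ax_hcomp_id_r _ AX).
    apply Heq_sym. apply (ax_hcomp_id_l _ AX).
Defined.

Definition compnat {F G H : TwoFunctor C D} (s : TwoNat F G) (t : TwoNat G H) : TwoNat F H.
Proof.
  refine {| ncomp := fun A => comp1 (ncomp t A) (ncomp s A) |}.
  - intros A B f.
    rewrite (ax_comp1_assoc _ AX), (nat1 t f), <- (ax_comp1_assoc _ AX), (nat1 s f),
      (ax_comp1_assoc _ AX). reflexivity.
  - intros A B f f' x. unfold rwhisk, lwhisk.
    rewrite <- !(ax_hcomp_id2 _ AX).
    eapply Heq_trans. apply (ax_hcomp_assoc _ AX).
    eapply Heq_trans. eapply Heq_hcomp. apply (nat2 t x). eapply Heq_refl.
    eapply Heq_trans. apply Heq_sym, (ax_hcomp_assoc _ AX).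
    eapply Heq_trans. eapply Heq_hcomp. eapply Heq_refl. apply (nat2 s x).
    apply (ax_hcomp_assoc _ AX).
Defined.

Definition idmod {F G : TwoFunctor C D} (s : TwoNat F G) : Modif s s.
Proof.
  refine {| mcomp := fun A => id2 (ncomp s A) |}.
  intros A B f. unfold rwhisk, lwhisk. rewrite !(ax_hcomp_id2 _ AX).
  apply Heq_id2. apply nat1.
Defined.

Definition vcompmod {F G : TwoFunctor C D} {s t r : TwoNat F G}
  (y : Modif t r) (x : Modif s t) : Modif s r.
Proof.
  refine {| mcomp := fun A => vcomp (mcomp y A) (mcomp x A) |}.
  intros A B f. unfold rwhisk, lwhisk.
  rewrite <- (ax_vcomp_id_l _ AX _ _ _ _ (id2 (fhom G f))) at 1.
  rewrite <- (ax_vcomp_id_l _ AX _ _ _ _ (id2 (fhom F f))).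
  rewrite !(ax_interchange _ AX).
  apply Heq_vcomp; apply mnat.
Defined.

Definition hcompmod {F G H : TwoFunctor C D} {s s' : TwoNat F G} {t t' : TwoNat G H}
  (y : Modif t t') (x : Modif s s') : Modif (compnat s t) (compnat s' t').
Proof.
  refine (@Build_Modif C D F H (compnat s t) (compnat s' t')
    (fun A => hcomp (mcomp y A) (mcomp x A)) _).
  intros A B f. unfold rwhisk, lwhisk. simpl.
  eapply Heq_trans. apply (ax_hcomp_assoc _ AX).
  eapply Heq_trans. eapply Heq_hcomp. apply (mnat y f). eapply Heq_refl.
  eapply Heq_trans. apply Heq_sym, (ax_hcomp_assoc _ AX).
  eapply Heq_trans. eapply Heq_hcomp. eapply Heq_refl. apply (mnat x f).
  apply (ax_hcomp_assoc _ AX).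
Defined.

Definition FunCat : PreTwoCat := {|
  ob := TwoFunctor C D;
  hom := fun F G => TwoNat F G;
  cell := fun F G s t => Modif s t;
  id1 := idnat;
  comp1 := fun F G H t s => compnat s t;
  id2 := fun F G s => idmod s;
  vcomp := fun F G s t r y x => vcompmod y x;
  hcomp := fun F G H s s' t t' y x => hcompmod y x
|}.
End FunCat.

Definition Class (P : PreTwoCat) := forall A B : ob P, hom A B -> Prop.

Section EFS.
Context {P : PreTwoCat}.

Definition iso1 {A B : ob P} (f : hom A B) : Prop :=
  exists g : hom B A, comp1 g f = id1 A /\ comp1 f g = id1 B.

Definition inv2 {A B : ob P} {f g : hom A B} (x : cell f g) : Prop :=
  exists y : cell g f, vcomp y x = id2 f /\ vcomp x y = id2 g.

Definition contains_isos (K : Class P) : Prop :=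
  forall (A B : ob P) (f : hom A B), iso1 f -> K A B f.

Definition efs_factor (E M : Class P) : Prop :=
  forall (A B : ob P) (a : hom A B),
    exists (X : ob P) (e : hom A X) (m : hom X B), E _ _ e /\ M _ _ m /\ a = comp1 m e.

Definition efs_lift (E M : Class P) : Prop :=
  forall (F F' G G' : ob P) (eps : hom F F') (mu : hom G G') (a : hom F G) (a' : hom F' G')
    (Psi : cell (comp1 a' eps) (comp1 mu a)),
    E _ _ eps -> M _ _ mu -> inv2 Psi ->
    exists (d : hom F' G) (Psit : cell a' (comp1 mu d)),
      (comp1 d eps = a /\ inv2 Psit /\ Heq (rwhisk Psit eps) Psi) /\
      (forall (d2 : hom F' G) (Psi2 : cell a' (comp1 mu d2)),
          comp1 d2 eps = a -> inv2 Psi2 -> Heq (rwhisk Psi2 eps) Psi ->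
          d2 = d /\ Heq Psi2 Psit) /\
      (Heq Psi (id2 (comp1 a' eps)) -> comp1 mu d = a' /\ Heq Psit (id2 a')).

Definition efs_2lift (E M : Class P) : Prop :=
  forall (F F' G G' : ob P) (eps : hom F F') (mu : hom G G')
    (a1 a2 : hom F G) (a1' a2' : hom F' G'),
    E _ _ eps -> M _ _ mu ->
    comp1 a1' eps = comp1 mu a1 -> comp1 a2' eps = comp1 mu a2 ->
    forall (Phi : cell a1 a2) (Phi' : cell a1' a2'),
      Heq (lwhisk mu Phi) (rwhisk Phi' eps) ->
      forall d1 d2 : hom F' G,
        comp1 d1 eps = a1 -> comp1 mu d1 = a1' ->
        comp1 d2 eps = a2 -> comp1 mu d2 = a2' ->
        exists Delta : cell d1 d2,
          (Heq (rwhisk Delta eps) Phi /\ Heq (lwhisk mu Delta) Phi') /\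
          (forall Delta' : cell d1 d2,
              Heq (rwhisk Delta' eps) Phi -> Heq (lwhisk mu Delta') Phi' -> Delta' = Delta).

Definition enhanced_fact_system (E M : Class P) : Prop :=
  contains_isos E /\ contains_isos M /\ efs_factor E M /\ efs_lift E M /\ efs_2lift E M.

Definition rigid_cond (M : Class P) : Prop :=
  forall (F G : ob P) (mu : hom F G) (a : hom G F),
    M _ _ mu ->
    (exists Psi : cell (comp1 mu a) (id1 G), inv2 Psi) ->
    exists Psi' : cell (comp1 a mu) (id1 F), inv2 Psi'.

Definition rigid_efs (E M : Class P) : Prop :=
  enhanced_fact_system E M /\ rigid_cond M.

Definition separates_parallel_pairs (E M : Class P) : Prop :=
  forall (F G : ob P) (a b : hom F G),
    (exists (F0 : ob P) (e : hom F0 F), E _ _ e /\ comp1 a e = comp1 b e) ->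
    (exists (G0 : ob P) (m : hom G G0), M _ _ m /\ comp1 m a = comp1 m b) ->
    a = b.

Definition two_epi {F G : ob P} (e : hom F G) : Prop :=
  forall (H : ob P) (b b' : hom G H) (x y : cell b b'), rwhisk x e = rwhisk y e -> x = y.

Definition two_mono {G H : ob P} (m : hom G H) : Prop :=
  forall (F : ob P) (b b' : hom F G) (x y : cell b b'), lwhisk m x = lwhisk m y -> x = y.

Definition postcomp_creates_inv2 {G G' : ob P} (mu : hom G G') : Prop :=
  forall (X : ob P) (a b : hom X G) (Psi : cell (comp1 mu a) (comp1 mu b)),
    inv2 Psi ->
    exists hat : cell a b,
      (inv2 hat /\ lwhisk mu hat = Psi) /\
      (forall hat' : cell a b, inv2 hat' -> lwhisk mu hat' = Psi -> hat' = hat).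

End EFS.

Definition pointwise {C : PreTwoCat} {D : TwoCat} (K : Class D) : Class (FunCat C D) :=
  fun F G s => forall A : ob C, K _ _ (ncomp s A).

(* Main.v *)
Require Import Defs.
From Stdlib Require Import Eqdep ProofIrrelevance FunctionalExtensionality IndefiniteDescription.

Section DLemmas.
Context (D : TwoCat).
Let AX := tc_ax D.

Lemma c_assoc (A B X Y : ob D) (f : hom A B) (g : hom B X) (h : hom X Y) :
  comp1 h (comp1 g f) = comp1 (comp1 h g) f.
Proof. apply (ax_comp1_assoc _ AX). Qed.
Lemma c_idl (A B : ob D) (f : hom A B) : comp1 (id1 B) f = f.
Proof. apply (ax_comp1_id_l _ AX). Qed.
Lemma c_idr (A B : ob D) (f : hom A B) : comp1 f (id1 A) = f.
Proof. apply (ax_comp1_id_r _ AX). Qed.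

Definition cast {A B : ob D} {f g f' g' : hom A B} (e1 : f = f') (e2 : g = g') (x : cell f g)
  : cell f' g' :=
  eq_rect _ (fun h => cell h g') (eq_rect _ (fun k => cell f k) x _ e2) _ e1.
Lemma cast_Heq {A B : ob D} {f g f' g' : hom A B} (e1 : f = f') (e2 : g = g') (x : cell f g) :
  Heq (cast e1 e2 x) x.
Proof. destruct e1, e2; reflexivity. Qed.
Lemma cast_inv {A B : ob D} {f g f' g' : hom A B} (e1 : f = f') (e2 : g = g') (x : cell f g) :
  inv2 x -> inv2 (cast e1 e2 x).
Proof. destruct e1, e2; auto. Qed.

Lemma Heq_rw {A B C : ob D} {g g' h h' : hom B C} (x : cell g g') (y : cell h h')
  (f f2 : hom A B) : Heq x y -> f = f2 -> Heq (rwhisk x f) (rwhisk y f2).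
Proof. intros H ->. unfold rwhisk. apply Heq_hcomp; auto. reflexivity. Qed.
Lemma Heq_lw {A B C : ob D} {g g' h h' : hom A B} (x : cell g g') (y : cell h h')
  (f f2 : hom B C) : Heq x y -> f = f2 -> Heq (lwhisk f x) (lwhisk f2 y).
Proof. intros H ->. unfold lwhisk. apply Heq_hcomp; auto. reflexivity. Qed.

Lemma rw_rw {A B X Y : ob D} (f : hom A B) (g : hom B X) {h h' : hom X Y} (x : cell h h') :
  Heq (rwhisk (rwhisk x g) f) (rwhisk x (comp1 g f)).
Proof.
  unfold rwhisk. eapply Heq_trans. apply Heq_sym, (ax_hcomp_assoc _ AX).
  rewrite (ax_hcomp_id2 _ AX). reflexivity.
Qed.
Lemma lw_lw {A B X Y : ob D} (g : hom X Y) (h : hom B X) {f f' : hom A B} (x : cell f f') :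
  Heq (lwhisk g (lwhisk h x)) (lwhisk (comp1 g h) x).
Proof.
  unfold lwhisk. eapply Heq_trans. apply (ax_hcomp_assoc _ AX).
  rewrite (ax_hcomp_id2 _ AX). reflexivity.
Qed.
Lemma rw_lw {A B X Y : ob D} (f : hom A B) (g : hom X Y) {h h' : hom B X} (x : cell h h') :
  Heq (rwhisk (lwhisk g x) f) (lwhisk g (rwhisk x f)).
Proof.
  unfold lwhisk, rwhisk. apply Heq_sym, (ax_hcomp_assoc _ AX).
Qed.
Lemma rw_vcomp {A B X : ob D} (f : hom A B) {g h k : hom B X} (y : cell h k) (x : cell g h) :
  rwhisk (vcomp y x) f = vcomp (rwhisk y f) (rwhisk x f).
Proof.
  unfold rwhisk. rewrite <- (ax_interchange _ AX), (ax_vcomp_id_l _ AX). reflexivity.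
Qed.
Lemma lw_vcomp {A B X : ob D} (f : hom B X) {g h k : hom A B} (y : cell h k) (x : cell g h) :
  lwhisk f (vcomp y x) = vcomp (lwhisk f y) (lwhisk f x).
Proof.
  unfold lwhisk. rewrite <- (ax_interchange _ AX), (ax_vcomp_id_l _ AX). reflexivity.
Qed.
Lemma rw_id2 {A B X : ob D} (f : hom A B) (g : hom B X) : rwhisk (id2 g) f = id2 (comp1 g f).
Proof. apply (ax_hcomp_id2 _ AX). Qed.
Lemma lw_id2 {A B X : ob D} (f : hom A B) (g : hom B X) : lwhisk g (id2 f) = id2 (comp1 g f).
Proof. apply (ax_hcomp_id2 _ AX). Qed.

Lemma rw_inv {A B X : ob D} (f : hom A B) {g h : hom B X} (x : cell g h) :
  inv2 x -> inv2 (rwhisk x f).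
Proof.
  intros [y [H1 H2]]. exists (rwhisk y f). rewrite <- !rw_vcomp, H1, H2, !rw_id2. auto.
Qed.
Lemma lw_inv {A B X : ob D} (f : hom B X) {g h : hom A B} (x : cell g h) :
  inv2 x -> inv2 (lwhisk f x).
Proof.
  intros [y [H1 H2]]. exists (lwhisk f y). rewrite <- !lw_vcomp, H1, H2, !lw_id2. auto.
Qed.

Lemma inv_Heq {A B : ob D} {f g f' g' : hom A B} (x : cell f g) (x' : cell g f)
  (y : cell f' g') (y' : cell g' f') :
  Heq x y -> vcomp x' x = id2 f -> vcomp x x' = id2 g ->
  vcomp y' y = id2 f' -> vcomp y y' = id2 g' -> Heq x' y'.
Proof.
  intros H. destruct (Heq_idx _ _ H) as [<- <-]. apply Heq_eq in H. subst y.
  intros H1 H2 H3 H4. apply Heq_of_eq.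
  rewrite <- (ax_vcomp_id_r _ AX _ _ _ _ x'), <- H4, (ax_vcomp_assoc _ AX), H1,
    (ax_vcomp_id_l _ AX). reflexivity.
Qed.

Lemma epi_Heq {F G H : ob D} (e : hom F G) : two_epi e ->
  forall (b1 b1' b2 b2' : hom G H) (x : cell b1 b1') (y : cell b2 b2'),
  b1 = b2 -> b1' = b2' -> Heq (rwhisk x e) (rwhisk y e) -> Heq x y.
Proof.
  intros He b1 b1' b2 b2' x y <- <- Hh. apply Heq_of_eq, He, Heq_eq, Hh.
Qed.
Lemma mono_Heq {F G H : ob D} (m : hom G H) : two_mono m ->
  forall (b1 b1' b2 b2' : hom F G) (x : cell b1 b1') (y : cell b2 b2'),
  b1 = b2 -> b1' = b2' -> Heq (lwhisk m x) (lwhisk m y) -> Heq x y.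
Proof.
  intros He b1 b1' b2 b2' x y <- <- Hh. apply Heq_of_eq, He, Heq_eq, Hh.
Qed.
End DLemmas.

Section FLemmas.
Context (C : PreTwoCat) (D : TwoCat).
Notation FC := (FunCat C D).

Lemma nat_ext {F G : TwoFunctor C D} (s t : TwoNat F G) :
  (forall A, ncomp s A = ncomp t A) -> s = t.
Proof.
  intro H. destruct s as [s1 s2 s3], t as [t1 t2 t3]. simpl in H.
  assert (s1 = t1) by (apply functional_extensionality_dep; exact H). subst t1.
  f_equal; apply proof_irrelevance.
Qed.

Lemma mod_ext {F G : TwoFunctor C D} {s t : TwoNat F G} (x y : Modif s t) :
  (forall A, mcomp x A = mcomp y A) -> x = y.
Proof.
  intro H. destruct x as [x1 x2], y as [y1 y2]. simpl in H.
  assert (x1 = y1) by (apply functional_extensionality_dep; exact H). subst y1.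
  f_equal; apply proof_irrelevance.
Qed.

Lemma FHeq_comp {F G : TwoFunctor C D} {s t s' t' : TwoNat F G}
  (x : Modif s t) (y : Modif s' t') :
  @Heq FC F G s t s' t' x y -> forall A, Heq (mcomp x A) (mcomp y A).
Proof.
  intro H. destruct (Heq_idx _ _ H) as [e1 e2]. simpl in e1, e2. subst s' t'.
  apply Heq_eq in H. simpl in H. subst y. reflexivity.
Qed.

Lemma FHeq_intro {F G : TwoFunctor C D} {s t s' t' : TwoNat F G}
  (x : Modif s t) (y : Modif s' t') :
  (forall A, ncomp s A = ncomp s' A) -> (forall A, ncomp t A = ncomp t' A) ->
  (forall A, Heq (mcomp x A) (mcomp y A)) -> @Heq FC F G s t s' t' x y.
Proof.
  intros H1 H2 H3. apply nat_ext in H1, H2. subst s' t'.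
  apply (@Heq_of_eq FC). apply mod_ext. intro A. apply Heq_eq, H3.
Qed.

Lemma Finv_comp {F G : TwoFunctor C D} {s t : TwoNat F G} (x : Modif s t) :
  @inv2 FC F G s t x -> forall A, inv2 (mcomp x A).
Proof.
  intros [y [H1 H2]] A. exists (mcomp y A).
  apply (f_equal (fun m => mcomp m A)) in H1, H2. simpl in H1, H2. auto.
Qed.

Lemma Finv_intro {F G : TwoFunctor C D} {s t : TwoNat F G} (x : Modif s t) :
  (forall A, inv2 (mcomp x A)) -> @inv2 FC F G s t x.
Proof.
  intro H.
  pose (yc := fun A => proj1_sig (constructive_indefinite_description _ (H A))).
  assert (Hy : forall A, vcomp (yc A) (mcomp x A) = id2 _ /\ vcomp (mcomp x A) (yc A) = id2 _).
  { intro A. exact (proj2_sig (constructive_indefinite_description _ (H A))). }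
  clearbody yc.
  assert (Hn : forall (A B : ob C) (f : hom A B),
    Heq (lwhisk (fhom G f) (yc A)) (rwhisk (yc B) (fhom F f))).
  { intros A B f. eapply (inv_Heq D).
    - apply (mnat x f).
    - rewrite <- lw_vcomp, (proj1 (Hy A)), lw_id2. reflexivity.
    - rewrite <- lw_vcomp, (proj2 (Hy A)), lw_id2. reflexivity.
    - rewrite <- rw_vcomp, (proj1 (Hy B)), rw_id2. reflexivity.
    - rewrite <- rw_vcomp, (proj2 (Hy B)), rw_id2. reflexivity. }
  exists (Build_Modif C D F G t s yc Hn). split; apply mod_ext; intro A; simpl; apply Hy.
Qed.

Lemma iso_pointwise (K : Class D) : contains_isos K -> contains_isos (P := FC) (pointwise K).
Proof.
  intros HK F G s [t [H1 H2]] A. apply HK. exists (ncomp t A).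
  apply (f_equal (fun n => ncomp n A)) in H1, H2. simpl in H1, H2. auto.
Qed.
End FLemmas.

Section Rigid.
Context (C : PreTwoCat) (D : TwoCat) (M : Class D).
Notation FC := (FunCat C D).
Context (Hmono : forall (A B : ob D) (m : hom A B), M A B m -> two_mono m)
        (Hcr : forall (A B : ob D) (m : hom A B), M A B m -> postcomp_creates_inv2 m).

Lemma rigid_pw : rigid_cond (P := FC) (pointwise M).
Proof.
  intros F G mu a HM [Psi HPsi].
  pose proof (Finv_comp C D Psi HPsi) as HPc.
  assert (e1 : forall A, comp1 (comp1 (ncomp mu A) (ncomp a A)) (ncomp mu A)
             = comp1 (ncomp mu A) (comp1 (ncomp a A) (ncomp mu A)))
    by (intro; symmetry; apply c_assoc).
  assert (e2 : forall A, comp1 (id1 (fob G A)) (ncomp mu A) = comp1 (ncomp mu A) (id1 (fob F A)))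
    by (intro; rewrite c_idl, c_idr; reflexivity).
  pose (Th := fun A => cast D (e1 A) (e2 A) (rwhisk (mcomp Psi A) (ncomp mu A))).
  assert (HT : forall A, exists hat : cell (comp1 (ncomp a A) (ncomp mu A)) (id1 (fob F A)),
     inv2 hat /\ lwhisk (ncomp mu A) hat = Th A).
  { intro A. destruct (Hcr _ _ _ (HM A) _ _ _ (Th A)) as [hat [[H1 H2] _]].
    - apply cast_inv, rw_inv, HPc.
    - eauto. }
  pose (hat := fun A => proj1_sig (constructive_indefinite_description _ (HT A))).
  assert (Hh : forall A, inv2 (hat A) /\ lwhisk (ncomp mu A) (hat A) = Th A).
  { intro A. exact (proj2_sig (constructive_indefinite_description _ (HT A))). }
  clearbody hat.
  assert (Hn : forall (A B : ob C) (f : hom A B),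
    Heq (lwhisk (fhom F f) (hat A)) (rwhisk (hat B) (fhom F f))).
  { intros A B f.
    assert (E1 : comp1 (ncomp mu B) (fhom F f) = comp1 (fhom G f) (ncomp mu A))
      by (symmetry; apply (nat1 mu)).
    apply (mono_Heq D _ (Hmono _ _ _ (HM B))).
    - rewrite !c_assoc, (nat1 a f), <- !c_assoc, <- E1. reflexivity.
    - rewrite c_idl, c_idr. reflexivity.
    - eapply Heq_trans. apply lw_lw.
      eapply Heq_trans. apply Heq_lw. apply Heq_refl. exact E1.
      eapply Heq_trans. apply Heq_sym, lw_lw.
      rewrite (proj2 (Hh A)). unfold Th.
      eapply Heq_trans. apply Heq_lw. apply cast_Heq. reflexivity.
      eapply Heq_trans. apply Heq_sym, rw_lw.
      eapply Heq_trans. apply Heq_rw. apply (mnat Psi f). reflexivity.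
      eapply Heq_trans. apply rw_rw.
      eapply Heq_trans. apply Heq_rw. apply Heq_refl. symmetry; exact E1.
      eapply Heq_trans. apply Heq_sym, rw_rw.
      eapply Heq_trans. apply Heq_rw. apply Heq_sym, (cast_Heq D (e1 B) (e2 B)). reflexivity.
      fold (Th B). rewrite <- (proj2 (Hh B)). apply rw_lw. }
  exists (Build_Modif C D F F (compnat C D mu a) (idnat C D F) hat Hn).
  apply Finv_intro. intro A. apply Hh.
Qed.
End Rigid.

Lemma nat_eq_comp {C : PreTwoCat} {D : TwoCat} {F G : TwoFunctor C D} (s t : TwoNat F G) :
  s = t -> forall A, ncomp s A = ncomp t A.
Proof. intros ->; reflexivity. Qed.

Section TwoLift.
Context (C : PreTwoCat) (D : TwoCat) (E M : Class D).
Notation FC := (FunCat C D).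
Context (H2 : efs_2lift E M)
        (Hepi : forall (A B : ob D) (e : hom A B), E A B e -> two_epi e).

Lemma twolift_pw : efs_2lift (P := FC) (pointwise E) (pointwise M).
Proof.
  intros F F' G G' eps mu a1 a2 a1' a2' HE HM Hs1 Hs2 Phi Phi' HPhi d1 d2 Hd1e Hd1m Hd2e Hd2m.
  pose proof (FHeq_comp C D _ _ HPhi) as HPc. simpl in HPc.
  assert (HX : forall A, exists Dl : cell (ncomp d1 A) (ncomp d2 A),
    (Heq (rwhisk Dl (ncomp eps A)) (mcomp Phi A) /\ Heq (lwhisk (ncomp mu A) Dl) (mcomp Phi' A)) /\
    (forall Dl' : cell (ncomp d1 A) (ncomp d2 A),
        Heq (rwhisk Dl' (ncomp eps A)) (mcomp Phi A) ->
        Heq (lwhisk (ncomp mu A) Dl') (mcomp Phi' A) -> Dl' = Dl)).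
  { intro A. exact (H2 _ _ _ _ _ _ _ _ _ _ (HE A) (HM A) (nat_eq_comp _ _ Hs1 A)
      (nat_eq_comp _ _ Hs2 A) (mcomp Phi A) (mcomp Phi' A) (HPc A) _ _
      (nat_eq_comp _ _ Hd1e A) (nat_eq_comp _ _ Hd1m A)
      (nat_eq_comp _ _ Hd2e A) (nat_eq_comp _ _ Hd2m A)). }
  pose (Dl := fun A => proj1_sig (constructive_indefinite_description _ (HX A))).
  assert (HD : forall A, _) by (intro A; exact (proj2_sig (constructive_indefinite_description _ (HX A)))).
  change (forall A, ((Heq (rwhisk (Dl A) (ncomp eps A)) (mcomp Phi A) /\
     Heq (lwhisk (ncomp mu A) (Dl A)) (mcomp Phi' A)) /\
    (forall Dl' : cell (ncomp d1 A) (ncomp d2 A),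
        Heq (rwhisk Dl' (ncomp eps A)) (mcomp Phi A) ->
        Heq (lwhisk (ncomp mu A) Dl') (mcomp Phi' A) -> Dl' = Dl A))) in HD.
  clearbody Dl.
  assert (Hn : forall (A B : ob C) (f : hom A B),
    Heq (lwhisk (fhom G f) (Dl A)) (rwhisk (Dl B) (fhom F' f))).
  { intros A B f. apply (epi_Heq D _ (Hepi _ _ _ (HE A))).
    - apply (nat1 d1).
    - apply (nat1 d2).
    - eapply Heq_trans. apply rw_lw.
      eapply Heq_trans. apply Heq_lw. apply (proj1 (proj1 (HD A))). reflexivity.
      eapply Heq_trans. apply (mnat Phi f).
      eapply Heq_trans. apply Heq_rw. apply Heq_sym, (proj1 (proj1 (HD B))). reflexivity.
      eapply Heq_trans. apply rw_rw.
      eapply Heq_trans. apply Heq_rw. apply Heq_refl. symmetry; apply (nat1 eps).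
      apply Heq_sym, rw_rw. }
  exists (Build_Modif C D F' G d1 d2 Dl Hn). split; [split|].
  - apply FHeq_intro; simpl.
    + exact (nat_eq_comp _ _ Hd1e).
    + exact (nat_eq_comp _ _ Hd2e).
    + intro A. apply (proj1 (proj1 (HD A))).
  - apply FHeq_intro; simpl.
    + exact (nat_eq_comp _ _ Hd1m).
    + exact (nat_eq_comp _ _ Hd2m).
    + intro A. apply (proj2 (proj1 (HD A))).
  - intros Dl' H1 H2'. apply mod_ext. intro A. simpl. apply (proj2 (HD A)).
    + exact (FHeq_comp C D _ _ H1 A).
    + exact (FHeq_comp C D _ _ H2' A).
Qed.
End TwoLift.

Lemma choice2 {I : Type} {X : I -> Type} {Y : forall i, X i -> Type}
  (R : forall i (x : X i), Y i x -> Prop) :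
  (forall i, exists x y, R i x y) ->
  exists (f : forall i, X i) (g : forall i, Y i (f i)), forall i, R i (f i) (g i).
Proof.
  intro H.
  exists (fun i => proj1_sig (constructive_indefinite_description _ (H i))).
  exists (fun i => proj1_sig (constructive_indefinite_description _
            (proj2_sig (constructive_indefinite_description _ (H i))))).
  intro i. exact (proj2_sig (constructive_indefinite_description _
            (proj2_sig (constructive_indefinite_description _ (H i))))).
Qed.

Section Lift.
Context (C : PreTwoCat) (D : TwoCat) (E M : Class D).
Notation FC := (FunCat C D).
Context (Hl : efs_lift E M)
        (Hepi : forall (A B : ob D) (e : hom A B), E A B e -> two_epi e).

Lemma lift_pw : efs_lift (P := FC) (pointwise E) (pointwise M).
Proof.
  intros F F' G G' eps mu a a' Psi HE HM HPsi.
  pose proof (Finv_comp C D Psi HPsi) as HPc.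
  pose proof (fun A => Hl _ _ _ _ (ncomp eps A) (ncomp mu A) (ncomp a A) (ncomp a' A)
     (mcomp Psi A) (HE A) (HM A) (HPc A)) as HL.
  destruct (choice2 _ HL) as [d [Pt HP]]. clear HL.
  assert (Hn1 : forall (A B : ob C) (f : hom A B),
     comp1 (fhom G f) (d A) = comp1 (d B) (fhom F' f)).
  { intros A B f.
    assert (ee1 : comp1 (comp1 (ncomp a' B) (ncomp eps B)) (fhom F f)
                = comp1 (comp1 (ncomp a' B) (fhom F' f)) (ncomp eps A))
      by (rewrite <- !c_assoc, <- (nat1 eps f); reflexivity).
    assert (ee2 : comp1 (comp1 (ncomp mu B) (ncomp a B)) (fhom F f)
                = comp1 (ncomp mu B) (comp1 (ncomp a B) (fhom F f)))
      by (symmetry; apply c_assoc).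
    pose (Psi2 := cast D ee1 ee2 (rwhisk (mcomp Psi B) (fhom F f))).
    destruct (Hl _ _ _ _ (ncomp eps A) (ncomp mu B) (comp1 (ncomp a B) (fhom F f))
       (comp1 (ncomp a' B) (fhom F' f)) Psi2 (HE A) (HM B)) as [dd [Pd [_ [Hu _]]]].
    { apply cast_inv, rw_inv, HPc. }
    assert (e4 : comp1 (comp1 (ncomp mu B) (d B)) (fhom F' f)
               = comp1 (ncomp mu B) (comp1 (d B) (fhom F' f))) by (symmetry; apply c_assoc).
    destruct (Hu (comp1 (d B) (fhom F' f)) (cast D eq_refl e4 (rwhisk (Pt B) (fhom F' f))))
      as [Hu1 _].
    { rewrite <- c_assoc, (nat1 eps f), c_assoc, (proj1 (proj1 (HP B))). reflexivity. }
    { apply cast_inv, rw_inv, (proj1 (proj2 (proj1 (HP B)))). }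
    { eapply Heq_trans. apply Heq_rw. apply cast_Heq. reflexivity.
      eapply Heq_trans. apply rw_rw.
      eapply Heq_trans. apply Heq_rw. apply Heq_refl. apply (nat1 eps f).
      eapply Heq_trans. apply Heq_sym, rw_rw.
      eapply Heq_trans. apply Heq_rw. apply (proj2 (proj2 (proj1 (HP B)))). reflexivity.
      apply Heq_sym, cast_Heq. }
    assert (e6 : comp1 (fhom G' f) (comp1 (ncomp mu A) (d A))
               = comp1 (ncomp mu B) (comp1 (fhom G f) (d A)))
      by (rewrite c_assoc, (nat1 mu f), <- c_assoc; reflexivity).
    destruct (Hu (comp1 (fhom G f) (d A)) (cast D (nat1 a' f) e6 (lwhisk (fhom G' f) (Pt A))))
      as [Hu2 _].
    { rewrite <- c_assoc, (proj1 (proj1 (HP A))), (nat1 a f). reflexivity. }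
    { apply cast_inv, lw_inv, (proj1 (proj2 (proj1 (HP A)))). }
    { eapply Heq_trans. apply Heq_rw. apply cast_Heq. reflexivity.
      eapply Heq_trans. apply rw_lw.
      eapply Heq_trans. apply Heq_lw. apply (proj2 (proj2 (proj1 (HP A)))). reflexivity.
      eapply Heq_trans. apply (mnat Psi f).
      apply Heq_sym, cast_Heq. }
    rewrite Hu1, Hu2. reflexivity. }
  assert (Hn2 : forall (A B : ob C) (f f' : hom A B) (x : cell f f'),
     Heq (rwhisk (fcell G x) (d A)) (lwhisk (d B) (fcell F' x))).
  { intros A B f f' x. apply (epi_Heq D _ (Hepi _ _ _ (HE A))).
    - apply Hn1.
    - apply Hn1.
    - eapply Heq_trans. apply rw_rw.
      eapply Heq_trans. apply Heq_rw. apply Heq_refl. apply (proj1 (proj1 (HP A))).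
      eapply Heq_trans. apply (nat2 a x).
      eapply Heq_trans. apply Heq_lw. apply Heq_refl. symmetry; apply (proj1 (proj1 (HP B))).
      eapply Heq_trans. apply Heq_sym, lw_lw.
      eapply Heq_trans. apply Heq_lw. apply Heq_sym, (nat2 eps x). reflexivity.
      apply Heq_sym, rw_lw. }
  pose (dN := Build_TwoNat C D F' G d Hn1 Hn2).
  assert (Hm : forall (A B : ob C) (f : hom A B),
     Heq (lwhisk (fhom G' f) (Pt A)) (rwhisk (Pt B) (fhom F' f))).
  { intros A B f. apply (epi_Heq D _ (Hepi _ _ _ (HE A))).
    - apply (nat1 a').
    - rewrite c_assoc, (nat1 mu f), <- c_assoc, Hn1, c_assoc. reflexivity.
    - eapply Heq_trans. apply rw_lw.
      eapply Heq_trans. apply Heq_lw. apply (proj2 (proj2 (proj1 (HP A)))). reflexivity.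
      eapply Heq_trans. apply (mnat Psi f).
      eapply Heq_trans. apply Heq_rw. apply Heq_sym, (proj2 (proj2 (proj1 (HP B)))). reflexivity.
      eapply Heq_trans. apply rw_rw.
      eapply Heq_trans. apply Heq_rw. apply Heq_refl. symmetry; apply (nat1 eps f).
      apply Heq_sym, rw_rw. }
  pose (PtM := Build_Modif C D F' G' a' (compnat C D dN mu) Pt Hm).
  exists dN, PtM. split; [split; [|split]|split].
  - apply nat_ext. intro A. simpl. apply (proj1 (proj1 (HP A))).
  - apply Finv_intro. intro A. apply (proj1 (proj2 (proj1 (HP A)))).
  - apply FHeq_intro; simpl.
    + reflexivity.
    + intro A. rewrite <- c_assoc, (proj1 (proj1 (HP A))). reflexivity.
    + intro A. apply (proj2 (proj2 (proj1 (HP A)))).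
  - intros d2 Psi2 H1 H2 H3.
    assert (K : forall A, ncomp d2 A = d A /\ Heq (mcomp Psi2 A) (Pt A)).
    { intro A. apply (proj1 (proj2 (HP A))).
      - exact (nat_eq_comp _ _ H1 A).
      - exact (Finv_comp C D Psi2 H2 A).
      - exact (FHeq_comp C D _ _ H3 A). }
    assert (Kd : d2 = dN) by (apply nat_ext; intro A; apply K).
    split; [exact Kd|].
    apply FHeq_intro; simpl.
    + reflexivity.
    + intro A. rewrite (proj1 (K A)). reflexivity.
    + intro A. apply K.
  - intro H. pose proof (FHeq_comp C D _ _ H) as HH. simpl in HH.
    assert (K : forall A, comp1 (ncomp mu A) (d A) = ncomp a' A /\ Heq (Pt A) (id2 (ncomp a' A))).
    { intro A. apply (proj2 (proj2 (HP A))). apply HH. }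
    split.
    + apply nat_ext. intro A. apply K.
    + apply FHeq_intro; simpl.
      * reflexivity.
      * intro A. apply K.
      * intro A. apply K.
Qed.
End Lift.

Lemma choice3 {I : Type} {X : I -> Type} {Y : forall i, X i -> Type}
  {Z : forall i (x : X i), Y i x -> Type}
  (R : forall i (x : X i) (y : Y i x), Z i x y -> Prop) :
  (forall i, exists x y z, R i x y z) ->
  exists (f : forall i, X i) (g : forall i, Y i (f i)) (h : forall i, Z i (f i) (g i)),
    forall i, R i (f i) (g i) (h i).
Proof.
  intro H.
  destruct (choice2 (fun i x (y : Y i x) => exists z, R i x y z) (fun i => H i)) as [f [g Hg]].
  exists f, g, (fun i => proj1_sig (constructive_indefinite_description _ (Hg i))).
  intro i. exact (proj2_sig (constructive_indefinite_description _ (Hg i))).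
Qed.

Lemma id2_inv {D : TwoCat} {A B : ob D} (f : hom A B) : inv2 (id2 f).
Proof. exists (id2 f). rewrite (ax_vcomp_id_l _ (tc_ax D)). auto. Qed.

Section FactorConstr.
Context (C : PreTwoCat) (D : TwoCat) (E M : Class D).
Context (Hl : efs_lift E M) (H2 : efs_2lift E M) (Hsep : separates_parallel_pairs E M)
        (Hepi : forall (A B : ob D) (e : hom A B), E A B e -> two_epi e).
Context (F G : TwoFunctor C D) (al : TwoNat F G) (Xo : ob C -> ob D)
  (e : forall A, hom (fob F A) (Xo A)) (m : forall A, hom (Xo A) (fob G A))
  (HE : forall A, E _ _ (e A)) (HM : forall A, M _ _ (m A))
  (Hal : forall A, ncomp al A = comp1 (m A) (e A)).

Lemma sq_eq (A B : ob C) (f : hom A B) :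
  comp1 (comp1 (fhom G f) (m A)) (e A) = comp1 (m B) (comp1 (e B) (fhom F f)).
Proof. rewrite <- c_assoc, <- Hal, (nat1 al f), Hal, <- c_assoc. reflexivity. Qed.

Lemma Xh_ex (A B : ob C) (f : hom A B) : exists dd : hom (Xo A) (Xo B),
  comp1 dd (e A) = comp1 (e B) (fhom F f) /\ comp1 (m B) dd = comp1 (fhom G f) (m A).
Proof.
  destruct (Hl _ _ _ _ (e A) (m B) (comp1 (e B) (fhom F f)) (comp1 (fhom G f) (m A))
     (cast D eq_refl (sq_eq A B f) (id2 _)) (HE A) (HM B)) as [dd [Pd [[H1 _] [_ H3]]]].
  { apply cast_inv, id2_inv. }
  exists dd. split; auto. apply H3, cast_Heq.
Qed.

Definition Xh (A B : ob C) (f : hom A B) : hom (Xo A) (Xo B) :=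
  proj1_sig (constructive_indefinite_description _ (Xh_ex A B f)).
Lemma Xh_spec (A B : ob C) (f : hom A B) :
  comp1 (Xh A B f) (e A) = comp1 (e B) (fhom F f) /\ comp1 (m B) (Xh A B f) = comp1 (fhom G f) (m A).
Proof. exact (proj2_sig (constructive_indefinite_description _ (Xh_ex A B f))). Qed.
Lemma Xh_uniq (A B : ob C) (f : hom A B) (dd : hom (Xo A) (Xo B)) :
  comp1 dd (e A) = comp1 (e B) (fhom F f) -> comp1 (m B) dd = comp1 (fhom G f) (m A) ->
  dd = Xh A B f.
Proof.
  intros H1 H3. destruct (Xh_spec A B f) as [K1 K2]. apply Hsep.
  - exists (fob F A), (e A). split; [apply HE|]. rewrite H1, K1. reflexivity.
  - exists (fob G B), (m B). split; [apply HM|]. rewrite H3, K2. reflexivity.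
Qed.

Lemma Xc_ex (A B : ob C) (f f' : hom A B) (x : cell f f') :
  exists Dl : cell (Xh A B f) (Xh A B f'),
  Heq (rwhisk Dl (e A)) (lwhisk (e B) (fcell F x)) /\
  Heq (lwhisk (m B) Dl) (rwhisk (fcell G x) (m A)).
Proof.
  destruct (Xh_spec A B f) as [K1 K2]. destruct (Xh_spec A B f') as [K3 K4].
  destruct (H2 _ _ _ _ (e A) (m B) _ _ _ _ (HE A) (HM B) (sq_eq A B f) (sq_eq A B f')
     (lwhisk (e B) (fcell F x)) (rwhisk (fcell G x) (m A))) with (d1 := Xh A B f) (d2 := Xh A B f')
    as [Dl [[J1 J2] _]]; auto.
  { eapply Heq_trans. apply lw_lw.
    eapply Heq_trans. apply Heq_lw. apply Heq_refl. symmetry; apply Hal.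
    eapply Heq_trans. apply Heq_sym, (nat2 al x).
    eapply Heq_trans. apply Heq_rw. apply Heq_refl. apply Hal.
    apply Heq_sym, rw_rw. }
  exists Dl. auto.
Qed.

Definition Xc (A B : ob C) (f f' : hom A B) (x : cell f f') : cell (Xh A B f) (Xh A B f') :=
  proj1_sig (constructive_indefinite_description _ (Xc_ex A B f f' x)).
Lemma Xc_spec (A B : ob C) (f f' : hom A B) (x : cell f f') :
  Heq (rwhisk (Xc A B f f' x) (e A)) (lwhisk (e B) (fcell F x)) /\
  Heq (lwhisk (m B) (Xc A B f f' x)) (rwhisk (fcell G x) (m A)).
Proof. exact (proj2_sig (constructive_indefinite_description _ (Xc_ex A B f f' x))). Qed.
Lemma Xc_uniq (A B : ob C) (f f' : hom A B) (x : cell f f') (Dl : cell (Xh A B f) (Xh A B f')) :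
  Heq (rwhisk Dl (e A)) (lwhisk (e B) (fcell F x)) -> Dl = Xc A B f f' x.
Proof.
  intro H. apply (Hepi _ _ _ (HE A)). apply Heq_eq.
  eapply Heq_trans. exact H. apply Heq_sym, Xc_spec.
Qed.

Lemma X_id1 (A : ob C) : Xh A A (id1 A) = id1 (Xo A).
Proof.
  symmetry. apply Xh_uniq.
  - rewrite (f_id1 _ _ F), c_idl, c_idr. reflexivity.
  - rewrite (f_id1 _ _ G), c_idl, c_idr. reflexivity.
Qed.
Lemma X_comp1 (A B X : ob C) (f : hom A B) (g : hom B X) :
  Xh A X (comp1 g f) = comp1 (Xh B X g) (Xh A B f).
Proof.
  symmetry. apply Xh_uniq.
  - rewrite <- c_assoc, (proj1 (Xh_spec A B f)), c_assoc, (proj1 (Xh_spec B X g)),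
      <- c_assoc, <- (f_comp1 _ _ F). reflexivity.
  - rewrite c_assoc, (proj2 (Xh_spec B X g)), <- c_assoc, (proj2 (Xh_spec A B f)),
      c_assoc, <- (f_comp1 _ _ G). reflexivity.
Qed.
Lemma X_id2 (A B : ob C) (f : hom A B) : Xc A B f f (id2 f) = id2 (Xh A B f).
Proof.
  symmetry. apply Xc_uniq. rewrite rw_id2, (f_id2 _ _ F), lw_id2.
  apply Heq_id2, Xh_spec.
Qed.
Lemma X_vcomp (A B : ob C) (f g h : hom A B) (x : cell g h) (y : cell f g) :
  Xc A B f h (vcomp x y) = vcomp (Xc A B g h x) (Xc A B f g y).
Proof.
  symmetry. apply Xc_uniq. rewrite rw_vcomp, (f_vcomp _ _ F), lw_vcomp.
  apply Heq_vcomp; apply Xc_spec.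
Qed.
Lemma X_hcomp (A B X : ob C) (f f' : hom A B) (g g' : hom B X) (y : cell g g') (x : cell f f') :
  Heq (Xc A X _ _ (hcomp y x)) (hcomp (Xc B X g g' y) (Xc A B f f' x)).
Proof.
  pose proof (tc_ax D) as AX.
  apply (epi_Heq D _ (Hepi _ _ _ (HE A))); try apply X_comp1.
  eapply Heq_trans. apply Xc_spec.
  eapply Heq_trans. apply Heq_lw. apply (f_hcomp _ _ F). reflexivity.
  unfold lwhisk at 1.
  eapply Heq_trans. apply (ax_hcomp_assoc _ AX).
  eapply Heq_trans. eapply Heq_hcomp. apply Heq_sym, (proj1 (Xc_spec B X g g' y)). apply Heq_refl.
  unfold rwhisk at 1.
  eapply Heq_trans. apply Heq_sym, (ax_hcomp_assoc _ AX).
  eapply Heq_trans. eapply Heq_hcomp. apply Heq_refl. apply Heq_sym, (proj1 (Xc_spec A B f f' x)).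
  unfold rwhisk.
  apply (ax_hcomp_assoc _ AX).
Qed.

Definition XF : TwoFunctor C D := Build_TwoFunctor C D Xo Xh Xc X_id1 X_comp1 X_id2 X_vcomp X_hcomp.

Lemma epsN_n1 (A B : ob C) (f : hom A B) : comp1 (fhom XF f) (e A) = comp1 (e B) (fhom F f).
Proof. apply Xh_spec. Qed.
Lemma epsN_n2 (A B : ob C) (f f' : hom A B) (x : cell f f') :
  Heq (rwhisk (fcell XF x) (e A)) (lwhisk (e B) (fcell F x)).
Proof. apply Xc_spec. Qed.
Definition epsN : TwoNat F XF := Build_TwoNat C D F XF e epsN_n1 epsN_n2.
Lemma muN_n1 (A B : ob C) (f : hom A B) : comp1 (fhom G f) (m A) = comp1 (m B) (fhom XF f).
Proof. symmetry; apply Xh_spec. Qed.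
Lemma muN_n2 (A B : ob C) (f f' : hom A B) (x : cell f f') :
  Heq (rwhisk (fcell G x) (m A)) (lwhisk (m B) (fcell XF x)).
Proof. apply Heq_sym, Xc_spec. Qed.
Definition muN : TwoNat XF G := Build_TwoNat C D XF G m muN_n1 muN_n2.

Lemma factor_result : al = compnat C D epsN muN.
Proof. apply nat_ext. intro A. apply Hal. Qed.
End FactorConstr.

Lemma factor_pw (C : PreTwoCat) (D : TwoCat) (E M : Class D)
  (Hf : efs_factor E M) (Hl : efs_lift E M) (H2 : efs_2lift E M)
  (Hsep : separates_parallel_pairs E M)
  (Hepi : forall (A B : ob D) (e : hom A B), E A B e -> two_epi e) :
  efs_factor (P := FunCat C D) (pointwise E) (pointwise M).
Proof.
  intros F G al.
  destruct (choice3 _ (fun A => Hf _ _ (ncomp al A))) as [Xo [e [m He]]].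
  exists (XF C D E M Hl H2 Hsep Hepi F G al Xo e m (fun A => proj1 (He A))
          (fun A => proj1 (proj2 (He A))) (fun A => proj2 (proj2 (He A)))).
  eexists (epsN _ _ _ _ _ _ _ _ _ _ _ _ _ _ _ _ _).
  eexists (muN _ _ _ _ _ _ _ _ _ _ _ _ _ _ _ _ _).
  split; [|split].
  - intro A. apply He.
  - intro A. apply He.
  - apply factor_result.
Qed.

Theorem theorem2p9 (C D : TwoCat) (E M : Class D) :
  enhanced_fact_system E M ->
  separates_parallel_pairs E M ->
  (forall (A B : ob D) (e : hom A B), E A B e -> two_epi e) ->
  (forall (A B : ob D) (m : hom A B), M A B m -> two_mono m) ->
  (forall (A B : ob D) (m : hom A B), M A B m -> postcomp_creates_inv2 m) ->
  rigid_efs (P := FunCat C D) (pointwise E) (pointwise M).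
Proof.
  intros [Hci [Hcm [Hf [Hl H2]]]] Hsep Hepi Hmono Hcr.
  split; [split; [|split; [|split; [|split]]]|].
  - apply iso_pointwise, Hci.
  - apply iso_pointwise, Hcm.
  - apply factor_pw; auto.
  - apply lift_pw; auto.
  - apply twolift_pw; auto.
  - apply rigid_pw; auto.
Qed.
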